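(* Let $n,M\ge1$ be integers, $\mathcal X=\{x^{(1)},\dots,x^{(L)}\}\subset\mathbb C$ a set of $L$ channel input symbols, $\sigma^2>0$, $g:\mathbb C\to[0,+\infty]$ measurable, $\epsilon>0$, $B,\delta\in\mathbb R$. Let $\mathscr C$ be a homogeneous $(n,M,\epsilon,B,\delta)$-code (as defined in the context), let $p_\ell=\int_{\mathcal E_\ell}f_{Y|X}(y|x^{(\ell)})dy$, assume $\sum_jp_j>0$, let $Q(x^{(\ell)})=p_\ell/\sum_{j=1}^Lp_j$, and assume $P_{\mathscr C}=Q$. Then $$\epsilon\ge1-\exp\Big(-nH(Q)+n\log\sum_{j=1}^Lp_j\Big).$$
   Context: Channel: outputs $\boldsymbol Y=\boldsymbol x+\boldsymbol N_1$, $\boldsymbol Z=\boldsymbol x+\boldsymbol N_2$, all noise components i.i.d. complex circularly symmetric Gaussian with real and imaginary parts of zero mean and variance $\sigma^2/2$; $f_{Y|X}(y|x)=\frac1{\pi\sigma^2}\exp(-|y-x|^2/\sigma^2)$, $f_{\boldsymbol Y|\boldsymbol X}(\boldsymbol y|\boldsymbol x)=\prod_tf_{Y|X}(y_t|x_t)$ (same for $\boldsymbol Z$). An $(n,M)$-code is $\mathscr C=\{(\boldsymbol u(i),\mathcal D_i)\}_{i=1}^M$ with $\boldsymbol u(i)\in\mathcal X^n$, $|u_t(i)|\le P$ for a fixed $P>0$, pairwise disjoint measurable $\mathcal D_i\subseteq\mathbb C^n$, $M\le2^{n\lfloor\log_2L\rfloor}$; decoding sets are of product form $\mathcal D_i=\mathcal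 D_{i,1}\times\cdots\times\mathcal D_{i,n}$, $\mathcal D_{i,t}\subseteq\mathbb C$ measurable. $\gamma_i(\mathscr C)=1-\int_{\mathcal D_i}f_{\boldsymbol Y|\boldsymbol X}(\boldsymbol y|\boldsymbol u(i))d\boldsymbol y$, $\gamma=\frac1M\sum_i\gamma_i$; $(n,M,\epsilon)$-code: $\gamma<\epsilon$. With $\bar g(\boldsymbol z)=\frac1n\sum_tg(z_t)$, $\theta_i=\Pr[\bar g(\boldsymbol Z)<B\mid\boldsymbol X=\boldsymbol u(i)]$, $\theta=\frac1M\sum_i\theta_i$; $(n,M,\epsilon,B,\delta)$-code: $(n,M,\epsilon)$-code with $\theta<\delta$. Types: $P_{\boldsymbol u(i)}(x^{(\ell)})=\frac1n\#\{t:u_t(i)=x^{(\ell)}\}$, $P_{\mathscr C}=\frac1M\sum_iP_{\boldsymbol u(i)}$. For each $\ell$, $\mathcal E_\ell=\mathcal D_{i^\star,t^\star}$ where $(i^\star,t^\star)$ minimizes $\int_{\mathcal D_{i,t}}f_{Y|X}(y|x^{(\ell)})dy$ over $\{1,\dots,M\}\times\{1,\dots,n\}$. The code is homogeneous if $P_{\boldsymbol u(i)}=P_{\mathscr C}$ for every $i$, and $\mathcal D_{i,t}=\mathcal E_\ell$ whenever $u_t(i)=x^{(\ell)}$. $H$ denotes entropy with natural logarithm. *)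

(* Defs.v *)
From HB Require Import structures.
From mathcomp Require Import all_boot all_order all_algebra.
From mathcomp Require Import all_classical all_reals all_analysis.
From mathcomp Require Import measurable_realfun.
Set Implicit Arguments. Unset Strict Implicit. Unset Printing Implicit Defensive.
Import Order.TTheory GRing.Theory Num.Theory.
Local Open Scope classical_set_scope.
Local Open Scope ring_scope.

Notation cplx R := (R * R)%type.
Section Channel.
Variable R : realType.

(* The complex plane C is modelled as R * R (real part, imaginary part),
   carrying the product Borel sigma-algebra and the Lebesgue measure
   lebesgue_measure \x lebesgue_measure. *)

Definition cnorm2 (z : (cplx R)) : R := z.1 ^+ 2 + z.2 ^+ 2.
Definition cdiff (y x : (cplx R)) : (cplx R) := (y.1 - x.1, y.2 - x.2).

Definition muC : set (cplx R) -> \bar R :=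
  ((@lebesgue_measure R) \x (@lebesgue_measure R))%E.

Definition fYX (s2 : R) (y x : (cplx R)) : R :=
  (pi * s2)^-1 * expR (- cnorm2 (cdiff y x) / s2).

(* vectors of C^n are represented by functions nat -> (cplx R) (coordinates
   0..n-1 are used); vcons y z = (y, z_0, z_1, ...) *)
Definition vcons (y : (cplx R)) (z : nat -> (cplx R)) : nat -> (cplx R) :=
  fun k => if k is k'.+1 then z k' else y.

(* Lebesgue integral over C^n of a nonnegative function, written as the
   iterated integral over the coordinates (Tonelli). *)
Fixpoint intCn (n : nat) (F : (nat -> (cplx R)) -> \bar R) : \bar R :=
  match n with
  | 0 => F (fun _ => (0, 0))
  | n'.+1 => (\int[muC]_y intCn n' (fun z => F (vcons y z)))%E
  end.

Definition fYXn (s2 : R) (n : nat) (x : 'I_n -> (cplx R)) (y : nat -> (cplx R)) : R :=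
  \prod_(t < n) fYX s2 (y t) (x t).

Definition probn (s2 : R) (n : nat) (x : 'I_n -> (cplx R)) (A : set (nat -> (cplx R))) : R :=
  fine (intCn n (fun y => ((\1_A y : R) * fYXn s2 x y)%:E)).

(* A code: M codewords of length n, symbol indices u i t in 'I_L, i.e.
   u_t(i) = xs (u i t);  decoding sets D_i = D i 0 x ... x D i (n-1). *)
Definition dec_set (n M : nat) (D : 'I_M -> 'I_n -> set (cplx R)) (i : 'I_M)
  : set (nat -> (cplx R)) := [set y | forall t : 'I_n, D i t (y t)].

Definition codeword (L n M : nat) (xs : 'I_L -> (cplx R)) (u : 'I_M -> 'I_n -> 'I_L)
  (i : 'I_M) : 'I_n -> (cplx R) := fun t => xs (u i t).

Definition gamma_i (L n M : nat) (s2 : R) (xs : 'I_L -> (cplx R))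
  (u : 'I_M -> 'I_n -> 'I_L) (D : 'I_M -> 'I_n -> set (cplx R)) (i : 'I_M) : R :=
  1 - probn s2 (codeword xs u i) (dec_set D i).

Definition gamma (L n M : nat) (s2 : R) (xs : 'I_L -> (cplx R))
  (u : 'I_M -> 'I_n -> 'I_L) (D : 'I_M -> 'I_n -> set (cplx R)) : R :=
  M%:R^-1 * \sum_(i < M) gamma_i s2 xs u D i.

Definition gbar (n : nat) (g : (cplx R) -> \bar R) (z : nat -> (cplx R)) : \bar R :=
  ((n%:R^-1)%:E * \sum_(t < n) g (z t))%E.

Definition theta_i (L n M : nat) (s2 : R) (xs : 'I_L -> (cplx R))
  (u : 'I_M -> 'I_n -> 'I_L) (g : (cplx R) -> \bar R) (B : R) (i : 'I_M) : R :=
  probn s2 (codeword xs u i) [set z | (gbar n g z < B%:E)%E].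

Definition theta (L n M : nat) (s2 : R) (xs : 'I_L -> (cplx R))
  (u : 'I_M -> 'I_n -> 'I_L) (g : (cplx R) -> \bar R) (B : R) : R :=
  M%:R^-1 * \sum_(i < M) theta_i s2 xs u g B i.

Definition is_code (L n M : nat) (P : R) (xs : 'I_L -> (cplx R))
  (u : 'I_M -> 'I_n -> 'I_L) (D : 'I_M -> 'I_n -> set (cplx R)) : Prop :=
  [/\ forall i t, Num.sqrt (cnorm2 (xs (u i t))) <= P,
      forall i t, measurable (D i t),
      forall i j : 'I_M, i != j -> dec_set D i `&` dec_set D j = set0
    & (M <= 2 ^ (n * trunc_log 2 L))%N].

Definition is_code_eps (L n M : nat) (P s2 eps : R) (xs : 'I_L -> (cplx R))
  (u : 'I_M -> 'I_n -> 'I_L) (D : 'I_M -> 'I_n -> set (cplx R)) : Prop :=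
  is_code P xs u D /\ gamma s2 xs u D < eps.

Definition is_code_eps_B_delta (L n M : nat) (P s2 eps : R) (g : (cplx R) -> \bar R)
  (B delta : R) (xs : 'I_L -> (cplx R))
  (u : 'I_M -> 'I_n -> 'I_L) (D : 'I_M -> 'I_n -> set (cplx R)) : Prop :=
  is_code_eps P s2 eps xs u D /\ theta s2 xs u g B < delta.

Definition ctype (L n M : nat) (u : 'I_M -> 'I_n -> 'I_L) (i : 'I_M) (l : 'I_L) : R :=
  #|[pred t : 'I_n | u i t == l]|%:R / n%:R.

Definition code_type (L n M : nat) (u : 'I_M -> 'I_n -> 'I_L) (l : 'I_L) : R :=
  M%:R^-1 * \sum_(i < M) ctype u i l.

Definition intC (s2 : R) (A : set (cplx R)) (x : (cplx R)) : \bar R :=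
  (\int[muC]_(y in A) (fYX s2 y x)%:E)%E.

Definition E_spec (L n M : nat) (s2 : R) (xs : 'I_L -> (cplx R))
  (D : 'I_M -> 'I_n -> set (cplx R)) (E : 'I_L -> set (cplx R)) : Prop :=
  forall l : 'I_L, exists (i0 : 'I_M) (t0 : 'I_n),
    E l = D i0 t0 /\
    forall (i : 'I_M) (t : 'I_n), (intC s2 (D i0 t0) (xs l) <= intC s2 (D i t) (xs l))%E.

Definition homogeneous (L n M : nat) (u : 'I_M -> 'I_n -> 'I_L)
  (D : 'I_M -> 'I_n -> set (cplx R)) (E : 'I_L -> set (cplx R)) : Prop :=
  (forall i l, ctype u i l = code_type u l) /\
  (forall i t, D i t = E (u i t)).

Definition entropy (L : nat) (Q : 'I_L -> R) : R :=
  - \sum_(l < L) (if Q l == 0 then 0 else Q l * ln (Q l)).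

End Channel.

(* Main.v *)
Require Import Defs.
From HB Require Import structures.
From mathcomp Require Import all_boot all_order all_algebra.
From mathcomp Require Import all_classical all_reals all_analysis.
From mathcomp Require Import measurable_realfun.
From mathcomp Require Import ring lra.
Import Order.TTheory GRing.Theory Num.Theory.
Local Open Scope classical_set_scope.
Local Open Scope ring_scope.

Section M.
Variable R : realType.
Let mu0 : @muC R set0 = 0%E. Proof. exact: measure0. Qed.
Let mu_ge0 (A : set (R * R)%type) : (0 <= @muC R A)%E. Proof. exact: measure_ge0. Qed.
Let mu_sa : semi_sigma_additive (@muC R : set (R*R)%type -> \bar R).
Proof.
move=> F mF tF mUF.
have := @measure_semi_sigma_additive _ _ _ (@lebesgue_measure R \x @lebesgue_measure R)%E F.
move=> /(_ mF tF mUF).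
exact.
Qed.
HB.instance Definition _ := isMeasure.Build _ (R * R)%type R (@muC R) mu0 mu_ge0 mu_sa.
End M.

Section S.
Variable R : realType.
Local Open Scope ereal_scope.

Lemma intCn_prod (n : nat) (h : 'I_n -> cplx R -> R) (k : \bar R) :
  (forall t y, (0 <= h t y)%R) -> (forall t, measurable_fun setT (h t)) ->
  0 <= k ->
  intCn n (fun y => k * (\prod_(t < n) h t (y t))%:E) =
  k * \prod_(t < n) \int[@muC R]_y (h t y)%:E.
Proof.
elim: n h k => [|n IH] h k h0 hm k0 /=.
  by rewrite !big_ord0.
have -> : (fun y : cplx R => intCn n (fun z => k * (\prod_(t < n.+1) h t (vcons y z t))%:E))
   = (fun y => (h ord0 y)%:E * (k * \prod_(t < n) \int[@muC R]_y (h (lift ord0 t) y)%:E)).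
  apply: funext => y.
  have -> : (fun z => k * (\prod_(t < n.+1) h t (vcons y z t))%:E) =
            (fun z => (k * (h ord0 y)%:E) * (\prod_(t < n) h (lift ord0 t) (z t))%:E).
    apply: funext => z; rewrite big_ord_recl /= EFinM muleA; congr (_ * _)%E.
  have k'0 : 0 <= k * (h ord0 y)%:E by rewrite mule_ge0 // lee_fin.
  rewrite (IH (fun t => h (lift ord0 t))) //.
  by rewrite muleAC muleC.
rewrite ge0_integralZr //.
- by rewrite big_ord_recl muleCA.
- exact/measurable_EFinP.
- by move=> y _; rewrite lee_fin.
- by rewrite mule_ge0 // prode_ge0 // => t _; apply: integral_ge0 => y _; rewrite lee_fin.
Qed.

Lemma fineM_le (a b : \bar R) : 0 <= a -> 0 <= b -> (fine (a * b) <= fine a * fine b)%R.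
Proof.
case: a => [a| |] //; case: b => [b| |] // a0 b0.
- have [->|a0'] := eqVneq a 0%R; first by rewrite mul0e /= mul0r.
  have ap : (0 < a)%R by rewrite lt_def a0' -lee_fin a0.
  by rewrite gt0_muley // /= mulr0.
- have [->|b0'] := eqVneq b 0%R; first by rewrite mule0 /= mulr0.
  have bp : (0 < b)%R by rewrite lt_def b0' -lee_fin b0.
  by rewrite gt0_mulye // /= mul0r.
- by rewrite mulyy /= mul0r.
Qed.

Lemma fine_prod_le (n : nat) (e : 'I_n -> \bar R) : (forall t, 0 <= e t) ->
  (fine (\prod_(t < n) e t) <= \prod_(t < n) fine (e t))%R.
Proof.
move=> e0.
suff : 0 <= \prod_(t < n) e t /\ (fine (\prod_(t < n) e t) <= \prod_(t < n) fine (e t))%R by case.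
apply: (big_ind2 (fun (a : \bar R) (r : R) => 0 <= a /\ (fine a <= r)%R)).
- by split => //=.
- move=> x1 x2 y1 y2 [x0 xl] [y0 yl]; split; first exact: mule_ge0.
  apply: le_trans; first exact: (fineM_le _ _ x0 y0).
  apply: ler_pM => //; exact: fine_ge0.
- by move=> t _; split.
Qed.

Lemma measurable_fYX (s2 : R) (x : cplx R) :
  measurable_fun setT (fun y : cplx R => fYX s2 y x).
Proof.
rewrite /fYX /cnorm2 /cdiff /=.
apply: measurable_funM; first exact: measurable_cst.
apply: measurableT_comp; first exact: measurable_expR.
apply: measurable_funM; last exact: measurable_cst.
apply: measurable_funN.
apply: measurable_funD; apply: measurable_funX; apply: measurable_funB;
  try exact: measurable_cst.
- exact: measurable_fst.
- exact: measurable_snd.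
Qed.

Lemma fYX_ge0 (s2 : R) y x : (0 < s2)%R -> (0 <= fYX s2 y x)%R.
Proof.
move=> s0; rewrite /fYX mulr_ge0 ?expR_ge0 // invr_ge0 mulr_ge0 // ?pi_ge0 //.
exact: ltW.
Qed.

Lemma intC_indic (s2 : R) (A : set (cplx R)) x :
  intC s2 A x = \int[@muC R]_y (\1_A y * fYX s2 y x)%:E.
Proof.
rewrite /intC integral_mkcond; apply: eq_integral => y _.
rewrite patchE indicE; case: (y \in A) => /=.
  by rewrite mul1r.
by rewrite mul0r.
Qed.
End S.

Theorem corollary3 (R : realType) (n M L : nat) (xs : 'I_L -> cplx R)
  (P s2 : R) (g : cplx R -> \bar R) (eps B delta : R)
  (u : 'I_M -> 'I_n -> 'I_L) (D : 'I_M -> 'I_n -> set (cplx R))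
  (E : 'I_L -> set (cplx R)) :
  (1 <= n)%N -> (1 <= M)%N ->
  injective xs ->
  0 < s2 -> 0 < P ->
  measurable_fun setT g -> (forall z, (0 <= g z)%E) ->
  0 < eps ->
  is_code_eps_B_delta P s2 eps g B delta xs u D ->
  E_spec s2 xs D E ->
  homogeneous u D E ->
  let p := fun l : 'I_L => fine (intC s2 (E l) (xs l)) in
  let S := \sum_(j < L) p j in
  0 < S ->
  let Q := fun l : 'I_L => p l / S in
  (forall l, code_type R u l = Q l) ->
  1 - expR (- n%:R * entropy Q + n%:R * ln S) <= eps.

Proof.
move=> n1 M1 xinj s20 P0 gm g0 eps0 [[[Hamp HDm Hdisj HM] Hgam] Hth] HE [Hct Hhom] p S S0 Q HQ.
have p0 : forall l, 0 <= p l.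
  move=> l; rewrite /p; apply: fine_ge0; apply: integral_ge0 => y _.
  by rewrite lee_fin fYX_ge0.
have Q0 : forall l, 0 <= Q l by move=> l; exact: divr_ge0 (p0 l) (ltW S0).
have SQ : \sum_(l < L) Q l = 1 by rewrite /Q -mulr_suml divff // gt_eqF.
have n0 : n%:R != 0 :> R by rewrite pnatr_eq0 -lt0n.
pose cnt i l := #|[pred t : 'I_n | u i t == l]|.
have cntE : forall i l, (cnt i l)%:R = n%:R * Q l :> R.
  by move=> i l; rewrite -HQ -(Hct i l) /ctype mulrC divfK.
set X := expR _.
have final : forall i, \prod_(l < L) p l ^+ cnt i l = X.
  move=> i; rewrite /X.
  have -> : - n%:R * entropy Q + n%:R * ln S =
     \sum_(l < L) (n%:R * (if Q l == 0 then 0 else Q l * ln (Q l)) + n%:R * Q l * ln S).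
    rewrite big_split /= -mulr_sumr -mulr_suml -mulr_sumr SQ mulr1 /entropy mulNr mulrN opprK.
    by [].
  rewrite expR_sum; apply: eq_bigr => l _.
  have [Ql0|Ql0] := eqVneq (Q l) 0.
    have c0 : cnt i l = 0%N by apply/eqP; rewrite -(eqr_nat R) cntE Ql0 mulr0.
    by rewrite Ql0 c0 expr0 !mulr0 mul0r addr0 expR0.
  have Qp : 0 < Q l by rewrite lt_def Ql0 Q0.
  have pE : p l = Q l * S by rewrite /Q divfK // gt_eqF.
  have pp : 0 < p l by rewrite pE mulr_gt0.
  have -> : n%:R * (Q l * ln (Q l)) + n%:R * Q l * ln S = (cnt i l)%:R * ln (p l).
    rewrite cntE pE lnM ?posrE //; ring.
  by rewrite mulr_natl -lnXn // lnK // posrE exprn_gt0.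
have key : forall i, probn s2 (codeword xs u i) (dec_set D i) <= X.
  move=> i.
  have -> : probn s2 (codeword xs u i) (dec_set D i) =
     fine (intCn n (fun y => 1%E * (\prod_(t < n) (\1_(D i t) (y t) * fYX s2 (y t) (xs (u i t))))%:E)%E).
    rewrite /probn; congr fine; congr intCn; apply: funext => y; rewrite mul1e; congr EFin.
    rewrite big_split /= /fYXn; congr (_ * _).
    have [Hy|Hy] := pselect (forall t, D i t (y t)).
      rewrite indicE mem_set // big1 // => t _; rewrite indicE mem_set //.
    have [t Ht] : exists t, ~ D i t (y t) by apply/existsNP.
    by rewrite indicE memNset // (bigD1 t) //= indicE memNset // mul0r.
  have E1 := @intCn_prod R n (fun t w => \1_(D i t) w * fYX s2 w (xs (u i t))) 1%E.
  rewrite /= in E1. rewrite E1; clear E1.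
  - rewrite mul1e; apply: le_trans.
      apply: fine_prod_le => t; apply: integral_ge0 => y _.
      by rewrite lee_fin mulr_ge0 ?fYX_ge0 // indicE ler0n.
    have -> : \prod_(t < n) fine (\int[@muC R]_y (\1_(D i t) y * fYX s2 y (xs (u i t)))%:E)
        = \prod_(t < n) p (u i t).
      by apply: eq_bigr => t _; rewrite /p -Hhom intC_indic.
    rewrite (partition_big (u i) xpredT) //= -(final i).
    rewrite le_eqVlt; apply/orP; left; apply/eqP; apply: eq_bigr => l _; rewrite /cnt -prodr_const.
    apply: eq_big => t; first by rewrite inE.
    by move/eqP ->.
  - by move=> t y; rewrite mulr_ge0 ?fYX_ge0 // indicE ler0n.
  - move=> t; apply: measurable_funM; first exact: measurable_indic.
    exact: measurable_fYX.
  - by [].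
apply: le_trans (ltW Hgam).
rewrite /gamma.
have H : \sum_(i < M) (1 - X) <= \sum_(i < M) gamma_i s2 xs u D i.
  by apply: ler_sum => i _; rewrite /gamma_i lerD2l lerN2 key.
rewrite sumr_const card_ord in H.
apply: le_trans (ler_wpM2l _ H); last by rewrite invr_ge0 ler0n.
have M0 : M%:R != 0 :> R by rewrite pnatr_eq0 -lt0n.
by rewrite -[(1 - X) *+ M]mulr_natl mulrA mulVf // mul1r.
Qed.
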